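(* For any constants $\alpha\ge 1$ and $\beta\ge 1$, there exist a number of processors $p$ and an in-tree task graph $T$ in the Pebble Game model such that no schedule $S$ of $T$ on $p$ processors satisfies both $C_{\max}(S)\le \alpha\, C^*_p(T)$ and $M(S)\le \beta\, M^*_p(T)$. Equivalently, no algorithm is simultaneously an $\alpha$-approximation for makespan minimization and a $\beta$-approximation for peak memory minimization when scheduling in-trees in the Pebble Game model.
   Context: Model. An in-tree task graph $T$ has nodes $\{1,\dots,n\}$ and a root; every non-root node $i$ has a parent, and $\mathrm{Children}(i)$ is the set of children of $i$. Each node $i$ has a processing time $w_i\ge 0$, an execution-file size $n_i\ge 0$ and an output-file size $f_i\ge 0$. A schedule on $p$ identical processors assigns each node $i$ a processor and a start time $\sigma_i\ge 0$; node $i$ runs without preemption during $[\sigma_i,\sigma_i+w_i)$, a processor runs at most one node at a time, and a node may start only after all its children have completed. The makespan is $C_{\max}=\max_i(\sigma_i+w_i)$. Memory: the output file of $i$ (size $f_i$) occupies memory from the start of $i$ until the completion of the parent of $i$ (for the root, until the end of the schedule), and the execution file of $i$ occupies memory while $i$ runs. The memory used at time $t$ is the total size of files present at time $t$; the peak memory $M(S)$ is the supremum over $t$ of the memory used. $C^*_p(T)$ denotes the minimum makespan and $M^*_p(T)$ the minimum peak memory over all schedules of $T$ on $p$ processors. The Pebble Game model is the special case $f_i=1$, $w_i=1$, $n_i=0$ for all $i$. An algorithm is an $\alpha$-approximation for makespan (resp. $\beta$-approximation for peak memory) if on every instance $(T,p)$ its schedule has makespan at most $\alpha C^*_p(T)$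 (resp. peak memory at most $\beta M^*_p(T)$). *)

(* Defs.v *)
From Stdlib Require Import Reals List.
Import ListNotations.
Open Scope R_scope.

(* An in-tree task graph with nodes 0..size-1 (the paper's 1..n). *)
Record InTree := {
  size : nat;
  root : nat;
  parent : nat -> nat;           (* parent of a non-root node; value at root irrelevant *)
  w : nat -> R;                  (* processing time *)
  nexec : nat -> R;
  fout : nat -> R;
  root_lt : (root < size)%nat;
  parent_lt : forall i, (i < size)%nat -> i <> root -> (parent i < size)%nat;
  (* every node reaches the root by following parents: the graph is a tree *)
  reaches_root : forall i, (i < size)%nat -> exists k, Nat.iter k parent i = root;
  w_nonneg : forall i, 0 <= w i;
  nexec_nonneg : forall i, 0 <= nexec i;
  fout_nonneg : forall i, 0 <= fout i
}.

Definition PebbleGame (T : InTree) : Prop :=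
  forall i, (i < size T)%nat -> fout T i = 1 /\ w T i = 1 /\ nexec T i = 0.

Record Schedule := { proc : nat -> nat; start : nat -> R }.

Definition running (T : InTree) (S : Schedule) (i : nat) (t : R) : Prop :=
  start S i <= t /\ t < start S i + w T i.

Definition ValidSchedule (T : InTree) (p : nat) (S : Schedule) : Prop :=
  (forall i, (i < size T)%nat -> (proc S i < p)%nat /\ 0 <= start S i) /\
  (forall i j t, (i < size T)%nat -> (j < size T)%nat -> i <> j ->
     proc S i = proc S j -> ~ (running T S i t /\ running T S j t)) /\
  (forall c, (c < size T)%nat -> c <> root T ->
     start S c + w T c <= start S (parent T c)).

Definition nodes (T : InTree) : list nat := seq 0 (size T).

Definition makespan (T : InTree) (S : Schedule) : R :=
  fold_right Rmax 0 (map (fun i => start S i + w T i) (nodes T)).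

Definition indic (a t b : R) : R :=
  if Rle_dec a t then (if Rlt_dec t b then 1 else 0) else 0.

(* output file of i lives from start of i until completion of its parent
   (for the root: until the end of the schedule); execution file lives while i runs *)
Definition out_end (T : InTree) (S : Schedule) (i : nat) : R :=
  if Nat.eq_dec i (root T) then makespan T S
  else start S (parent T i) + w T (parent T i).

Definition mem_used (T : InTree) (S : Schedule) (t : R) : R :=
  fold_right Rplus 0
    (map (fun i => fout T i * indic (start S i) t (out_end T S i)
                 + nexec T i * indic (start S i) t (start S i + w T i))
         (nodes T)).

Definition PeakMemory (T : InTree) (S : Schedule) (m : R) : Prop :=
  is_lub (fun x => exists t, x = mem_used T S t) m.

Definition OptMakespan (T : InTree) (p : nat) (c : R) : Prop :=
  (exists S, ValidSchedule T p S /\ makespan T S = c) /\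
  (forall S, ValidSchedule T p S -> c <= makespan T S).

Definition OptPeakMemory (T : InTree) (p : nat) (m : R) : Prop :=
  (exists S, ValidSchedule T p S /\ PeakMemory T S m) /\
  (forall S m', ValidSchedule T p S -> PeakMemory T S m' -> m <= m').

(* Main.v *)
Require Import Defs.
From Stdlib Require Import Reals Lia Arith ZArith Lra List.
Import ListNotations.
Open Scope R_scope.

Definition par (N i : nat) : nat := if Nat.eqb (i mod N) 0 then (i + N)%nat else S i.

Lemma divmod_char (N x q r : nat) : (r < N)%nat -> x = (N*q + r)%nat -> (x / N = q)%nat /\ (x mod N = r)%nat.
Proof. intros H1 H2. split. symmetry; eapply Nat.div_unique; eauto. symmetry; eapply Nat.mod_unique; eauto. Qed.

Lemma par_bounds N i : (i < N*N)%nat -> (i < par N i <= N*N)%nat.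
Proof.
  intros H. unfold par. destruct (Nat.eqb_spec (i mod N) 0) as [E|E].
  - assert (N > 0)%nat by (destruct N; simpl in H; lia).
    pose proof (Nat.div_mod_eq i N) as D. rewrite E in D.
    set (q := (i / N)%nat) in *. assert (q < N)%nat by nia. nia.
  - lia.
Qed.

Lemma comb_parent_lt N : forall i, (i < N*N+1)%nat -> i <> (N*N)%nat -> (par N i < N*N+1)%nat.
Proof. intros i H1 H2. pose proof (par_bounds N i ltac:(lia)). lia. Qed.

Lemma comb_reaches N : forall i, (i < N*N+1)%nat -> exists k, Nat.iter k (par N) i = (N*N)%nat.
Proof.
  intros i Hi. remember (N*N - i)%nat as d. revert i Hi Heqd.
  induction d as [d IH] using (well_founded_induction lt_wf). intros i Hi Hd.
  destruct (Nat.eq_dec i (N*N)) as [E|E]. { exists 0%nat. simpl. auto. }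
  pose proof (par_bounds N i ltac:(lia)).
  destruct (IH (N*N - par N i)%nat ltac:(lia) (par N i) ltac:(lia) eq_refl) as [k Hk].
  exists (S k). rewrite Nat.iter_succ_r. auto.
Qed.

Definition comb (N : nat) : InTree := {|
  size := (N*N+1)%nat; root := (N*N)%nat; parent := par N;
  w := fun _ => 1; nexec := fun _ => 0; fout := fun _ => 1;
  root_lt := ltac:(lia);
  parent_lt := comb_parent_lt N;
  reaches_root := comb_reaches N;
  w_nonneg := fun _ => Rle_0_1;
  nexec_nonneg := fun _ => Rle_refl 0;
  fout_nonneg := fun _ => Rle_0_1 |}.

Definition sumR (l : list nat) (f : nat -> R) : R := fold_right Rplus 0 (map f l).

Lemma sumR_le l f g : (forall i, In i l -> f i <= g i) -> sumR l f <= sumR l g.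
Proof. induction l; unfold sumR in *; simpl; intros H. lra.
  pose proof (H a (or_introl eq_refl)). pose proof (IHl (fun i Hi => H i (or_intror Hi))). lra. Qed.

Lemma sumR_plus l f g : sumR l (fun i => f i + g i) = sumR l f + sumR l g.
Proof. induction l; unfold sumR in *; simpl. lra. rewrite IHl. lra. Qed.

Lemma sumR_const l c : sumR l (fun _ => c) = INR (length l) * c.
Proof. induction l; unfold sumR in *; simpl. lra. rewrite IHl. destruct (length l); simpl; lra. Qed.

Lemma sumR_nonneg l f : (forall i, In i l -> 0 <= f i) -> 0 <= sumR l f.
Proof. induction l; unfold sumR in *; simpl; intros H. lra.
  pose proof (H a (or_introl eq_refl)). pose proof (IHl (fun i Hi => H i (or_intror Hi))). lra. Qed.

Lemma sumR_single_ge l f x : (forall i, In i l -> 0 <= f i) -> In x l -> f x <= sumR l f.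
Proof. induction l; simpl; intros H Hx. contradiction.
  pose proof (sumR_nonneg l f (fun i Hi => H i (or_intror Hi))). unfold sumR in *; simpl.
  destruct Hx as [E|E]. subst. lra. pose proof (IHl (fun i Hi => H i (or_intror Hi)) E).
  pose proof (H a (or_introl eq_refl)). lra. Qed.

Lemma sumR_swap l1 l2 (f : nat -> nat -> R) :
  sumR l1 (fun k => sumR l2 (fun i => f i k)) = sumR l2 (fun i => sumR l1 (fun k => f i k)).
Proof. induction l1; unfold sumR in *; simpl.
  - induction l2; simpl; lra.
  - rewrite IHl1. symmetry. apply (sumR_plus l2 (fun i => f i a)). Qed.

Lemma sumR_delta f a : forall len s,
  sumR (seq s len) (fun i => if Nat.eqb i a then f i else 0) =
  if andb (Nat.leb s a) (Nat.ltb a (s+len)) then f a else 0.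
Proof.
  induction len; intros s; unfold sumR in *; simpl.
  - destruct (Nat.leb_spec s a); destruct (Nat.ltb_spec a (s+0)); simpl; try lra; lia.
  - rewrite IHlen. destruct (Nat.eqb_spec s a).
    + subst. destruct (Nat.leb_spec (S a) a); [lia|]. simpl.
      replace (a =? a)%nat with true by (symmetry; apply Nat.eqb_refl).
      destruct (Nat.leb_spec a a); destruct (Nat.ltb_spec a (a + S len)); simpl; try lra; lia.
    + destruct (Nat.leb_spec s a); destruct (Nat.ltb_spec a (s + S len));
      destruct (Nat.leb_spec (S s) a); destruct (Nat.ltb_spec a (S s + len)); simpl; try lra; lia.
Qed.

Lemma fmax_ge (g : nat -> R) l i : In i l -> g i <= fold_right Rmax 0 (map g l).
Proof. induction l; simpl; intros H. contradiction. destruct H as [E|E]. subst; apply Rmax_l.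
  eapply Rle_trans; [apply IHl; auto| apply Rmax_r]. Qed.

Lemma fmax_le (g : nat -> R) l X : 0 <= X -> (forall i, In i l -> g i <= X) -> fold_right Rmax 0 (map g l) <= X.
Proof. induction l; simpl; intros H0 H. auto. apply Rmax_lub; auto. Qed.

Lemma indic_1 a t b : a <= t -> t < b -> indic a t b = 1.
Proof. intros; unfold indic; destruct (Rle_dec a t); destruct (Rlt_dec t b); lra. Qed.
Lemma indic_range a t b : 0 <= indic a t b <= 1.
Proof. unfold indic; destruct (Rle_dec a t); destruct (Rlt_dec t b); lra. Qed.
Lemma indic_cases a t b : indic a t b = 0 \/ (indic a t b = 1 /\ a <= t /\ t < b).
Proof. unfold indic; destruct (Rle_dec a t); destruct (Rlt_dec t b); auto. Qed.

Lemma mem_comb N S t : mem_used (comb N) S t = sumR (nodes (comb N)) (fun i => indic (start S i) t (out_end (comb N) S i)).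
Proof. unfold mem_used, sumR. f_equal. apply map_ext. intros i. simpl. ring. Qed.

Lemma in_nodes T i : In i (nodes T) <-> (i < size T)%nat.
Proof. unfold nodes. rewrite in_seq. lia. Qed.

Lemma par_small N j : (1 <= j < N)%nat -> par N j = S j.
Proof. intros H. unfold par. rewrite Nat.mod_small by lia.
  destruct (Nat.eqb_spec j 0); lia. Qed.

Lemma par_spine N k : (N > 0)%nat -> par N (k*N) = (k*N + N)%nat.
Proof. intros H. unfold par. rewrite Nat.Div0.mod_mul. reflexivity. Qed.

Lemma par_top N : (2 <= N)%nat -> par N (N*N-1) = (N*N)%nat.
Proof. intros H. unfold par.
  destruct (divmod_char N (N*N-1) (N-1) (N-1) ltac:(lia) ltac:(nia)) as [_ ->].
  destruct (Nat.eqb_spec (N-1) 0); lia. Qed.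

Lemma makespan_ge T S i : (i < size T)%nat -> start S i + w T i <= makespan T S.
Proof. intros H. unfold makespan. apply (fmax_ge (fun i => start S i + w T i)). apply in_nodes; auto. Qed.

Lemma valid_child N p S c : ValidSchedule (comb N) p S -> (c < N*N+1)%nat -> c <> (N*N)%nat ->
  start S c + 1 <= start S (par N c).
Proof. intros [_ [_ H]] H1 H2. apply (H c H1 H2). Qed.

Lemma out_end_ge N p S i : ValidSchedule (comb N) p S -> (i < N*N+1)%nat ->
  start S i + 1 <= out_end (comb N) S i.
Proof. intros HV Hi. unfold out_end. simpl. destruct (Nat.eq_dec i (N*N)).
  - apply (makespan_ge (comb N) S i Hi).
  - pose proof (valid_child N p S i HV Hi n). pose proof (par_bounds N i ltac:(lia)).
    destruct HV as [H1 _]. lra. Qed.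

Lemma lb1 N p S : (2 <= N)%nat -> ValidSchedule (comb N) p S ->
  forall j, (1 <= j <= N)%nat -> INR j - 1 <= start S j.
Proof. intros HN HV j. induction j; intros Hj. lia.
  destruct (Nat.eq_dec j 0). subst. destruct HV as [H1 _]. destruct (H1 1%nat ltac:(simpl; nia)). simpl INR. lra.
  pose proof (IHj ltac:(lia)). pose proof (valid_child N p S j HV ltac:(nia) ltac:(nia)).
  rewrite par_small in H0 by lia. rewrite S_INR. lra. Qed.

Lemma lb2 N p S : (2 <= N)%nat -> ValidSchedule (comb N) p S ->
  forall k, (1 <= k <= N)%nat -> INR N + INR k - 2 <= start S (k*N).
Proof. intros HN HV k. induction k; intros Hk. lia.
  destruct (Nat.eq_dec k 0). subst. simpl. rewrite Nat.add_0_r. pose proof (lb1 N p S HN HV N ltac:(lia)). lra.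
  pose proof (IHk ltac:(lia)). pose proof (valid_child N p S (k*N) HV ltac:(nia) ltac:(nia)).
  rewrite par_spine in H0 by lia. replace (Datatypes.S k * N)%nat with (k*N+N)%nat by lia. rewrite S_INR. lra. Qed.

Lemma makespan_lb N p S : (2 <= N)%nat -> ValidSchedule (comb N) p S -> 2 * INR N - 1 <= makespan (comb N) S.
Proof. intros HN HV. pose proof (lb2 N p S HN HV N ltac:(lia)).
  pose proof (makespan_ge (comb N) S (N*N) ltac:(simpl; lia)). simpl in H0. lra. Qed.

Lemma mem_lb N p S : (2 <= N)%nat -> ValidSchedule (comb N) p S -> 3 <= mem_used (comb N) S (start S (N*N)).
Proof. intros HN HV. rewrite mem_comb.
  set (f := fun i => indic (start S i) (start S (N*N)) (out_end (comb N) S i)).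
  set (a := (N*N)%nat). set (b := (N*N-1)%nat). set (c := ((N-1)*N)%nat).
  assert (Hf : forall i, 0 <= f i) by (intros; apply indic_range).
  assert (Hle : sumR (nodes (comb N)) (fun i => (if Nat.eqb i a then f i else 0) + (if Nat.eqb i b then f i else 0)
      + (if Nat.eqb i c then f i else 0)) <= sumR (nodes (comb N)) f).
  { apply sumR_le. intros i _. assert (a <> b) by (unfold a,b; nia). assert (a <> c) by (unfold a,c; nia).
    assert (b <> c) by (unfold b,c; nia). pose proof (Hf i).
    destruct (Nat.eqb_spec i a); destruct (Nat.eqb_spec i b); destruct (Nat.eqb_spec i c); try lia. all: generalize (Hf i); generalize (f i); intros; lra. }
  rewrite !sumR_plus in Hle. unfold nodes in Hle. simpl size in Hle. rewrite !sumR_delta in Hle.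
  destruct (Nat.leb_spec 0 a); [|lia]. destruct (Nat.leb_spec 0 b); [|lia]. destruct (Nat.leb_spec 0 c); [|lia].
  destruct (Nat.ltb_spec a (0 + (N*N+1))); [|unfold a in *; lia].
  destruct (Nat.ltb_spec b (0 + (N*N+1))); [|unfold b in *; lia].
  destruct (Nat.ltb_spec c (0 + (N*N+1))); [|unfold c in *; nia]. simpl in Hle.
  assert (f a = 1). { unfold f, a. apply indic_1. lra. pose proof (out_end_ge N p S (N*N) HV ltac:(lia)). lra. }
  assert (f b = 1). { unfold f, b in *. pose proof (valid_child N p S (N*N-1) HV ltac:(lia) ltac:(nia)) as Hc.
    rewrite par_top in Hc by lia. apply indic_1. lra. unfold out_end. simpl.
    destruct (Nat.eq_dec (N*N-1) (N*N)). nia. rewrite par_top by lia. lra. }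
  assert (f c = 1). { unfold f, c in *. pose proof (valid_child N p S ((N-1)*N) HV ltac:(nia) ltac:(nia)) as Hc.
    rewrite (par_spine N (N-1)) in Hc by lia. replace ((N-1)*N+N)%nat with (N*N)%nat in Hc by nia.
    apply indic_1. lra. unfold out_end. simpl.
    destruct (Nat.eq_dec ((N-1)*N) (N*N)). nia. rewrite (par_spine N (N-1)) by lia.
    replace ((N-1)*N+N)%nat with (N*N)%nat by nia. lra. }
  unfold nodes; simpl size. lra.
Qed.

Lemma INR_lt_succ a b : INR a + 1 <= INR b <-> (a < b)%nat.
Proof. split; intros H.
  - apply INR_lt. lra.
  - rewrite <- S_INR. apply le_INR. lia. Qed.

Definition Sseq : Schedule := {| proc := fun _ => 0%nat; start := INR |}.

Lemma Sseq_valid N : ValidSchedule (comb N) (N*N+1) Sseq.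
Proof. split; [|split].
  - intros i _. simpl. split. lia. apply pos_INR.
  - intros i j t _ _ Hij _ [[H1 H2] [H3 H4]]. simpl in *.
    destruct (Nat.lt_total i j) as [L|[L|L]]; [|contradiction|];
    apply INR_lt_succ in L; lra.
  - intros c Hc Hr. simpl in *. pose proof (par_bounds N c ltac:(lia)). apply INR_lt_succ. lia.
Qed.

Lemma Sseq_makespan N : makespan (comb N) Sseq <= INR (N*N+1).
Proof. unfold makespan. apply fmax_le. apply pos_INR. intros i Hi. apply in_nodes in Hi. simpl in *.
  apply INR_lt_succ. lia. Qed.

Definition cN (N k : nat) : nat := if Nat.eqb (k mod N) 0 then (k - N)%nat else (N*(k/N))%nat.

Lemma trap N i k : (2 <= N)%nat -> (i < N*N)%nat -> (i <= k <= par N i)%nat -> i = k \/ i = (k-1)%nat \/ i = cN N k.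
Proof. intros HN Hi Hk. unfold par, cN in *.
  pose proof (Nat.div_mod_eq i N) as Di. pose proof (Nat.div_mod_eq k N) as Dk.
  pose proof (Nat.mod_upper_bound i N ltac:(lia)). pose proof (Nat.mod_upper_bound k N ltac:(lia)).
  set (qi := (i/N)%nat) in *. set (ri := (i mod N)%nat) in *. set (qk := (k/N)%nat) in *. set (rk := (k mod N)%nat) in *.
  destruct (Nat.eqb_spec ri 0); destruct (Nat.eqb_spec rk 0); try lia.
  - assert (qi <= qk <= qi + 1)%nat by nia. assert (qk = qi \/ qk = qi+1)%nat by lia. nia.
  - assert (qk = qi) by nia. subst qk. right; right. lia.
Qed.

Lemma floor_nat t : 0 <= t -> exists k, INR k <= t < INR k + 1.
Proof. intros Ht. destruct (archimed t) as [H1 H2].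
  assert (0 <= up t - 1)%Z. { assert (0 < up t)%Z. apply lt_IZR. lra. lia. }
  exists (Z.to_nat (up t - 1)). rewrite INR_IZR_INZ, Z2Nat.id by auto. rewrite minus_IZR. simpl. lra. Qed.

Lemma delta_le1 a n : sumR (seq 0 n) (fun i => if Nat.eqb i a then 1 else 0) <= 1.
Proof. pose proof (sumR_delta (fun _ => 1) a n 0). simpl in H. rewrite H.
  destruct (a <? n)%nat; lra. Qed.

Lemma Sseq_mem_ub N t : (2 <= N)%nat -> mem_used (comb N) Sseq t <= 3.
Proof. intros HN. rewrite mem_comb. destruct (Rlt_dec t 0) as [Ht|Ht].
  - eapply Rle_trans. apply (sumR_le _ _ (fun _ => 0)).
    + intros i _. unfold indic. simpl. destruct (Rle_dec (INR i) t). pose proof (pos_INR i). lra. lra.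
    + rewrite sumR_const. lra.
  - destruct (floor_nat t ltac:(lra)) as [k Hk].
    set (d := fun a i => if Nat.eqb i a then 1 else 0).
    eapply Rle_trans. apply (sumR_le _ _ (fun i => d k i + d (k-1)%nat i + d (cN N k) i)).
    + intros i Hi. apply in_nodes in Hi. simpl in Hi.
      assert (Hd : forall a, 0 <= d a i) by (intros; unfold d; destruct (Nat.eqb i a); lra).
      assert (Hd1 : forall a, i = a -> d a i = 1) by (intros; unfold d; subst; rewrite Nat.eqb_refl; auto).
      pose proof (Hd k). pose proof (Hd (k-1)%nat). pose proof (Hd (cN N k)).
      destruct (indic_cases (start Sseq i) t (out_end (comb N) Sseq i)) as [E|[E [A B]]]; rewrite E; [lra|].
      simpl in A. assert (Hik : (i <= k)%nat). { assert (Z1 : INR i < INR k + 1) by lra. rewrite <- S_INR in Z1. apply INR_lt in Z1. lia. }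
      unfold out_end in B. simpl in B. destruct (Nat.eq_dec i (N*N)).
      * pose proof (Sseq_makespan N). assert (Z2 : INR k < INR (N*N+1)) by lra. apply INR_lt in Z2.
        rewrite (Hd1 k) by lia. lra.
      * assert (Hkp : (k <= par N i)%nat). { assert (Z3 : INR k < INR (par N i) + 1) by (simpl in B; lra).
          rewrite <- S_INR in Z3. apply INR_lt in Z3. lia. }
        destruct (trap N i k HN ltac:(lia) ltac:(lia)) as [X|[X|X]];
          [rewrite (Hd1 k X)|rewrite (Hd1 _ X)|rewrite (Hd1 _ X)]; lra.
    + rewrite !sumR_plus. unfold nodes. simpl size.
      pose proof (delta_le1 k (N*N+1)). pose proof (delta_le1 (k-1) (N*N+1)). pose proof (delta_le1 (cN N k) (N*N+1)).
      unfold d. lra.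
Qed.

Lemma Sseq_peak N : (2 <= N)%nat -> PeakMemory (comb N) Sseq 3.
Proof. intros HN. split.
  - intros x [t ->]. apply Sseq_mem_ub; auto.
  - intros b Hb. eapply Rle_trans. apply (mem_lb N (N*N+1) Sseq HN (Sseq_valid N)). apply Hb. eauto. Qed.

Definition fsn (N i : nat) : nat :=
  if Nat.eqb (i mod N) 0 then (if Nat.eqb i 0 then 0 else N + i/N - 2) else (i mod N - 1)%nat.

Definition Sfast (N : nat) : Schedule := {| proc := fun i => i; start := fun i => INR (fsn N i) |}.

Lemma fsn_child N c : (2 <= N)%nat -> (c < N*N)%nat -> (fsn N c < fsn N (par N c))%nat.
Proof. intros HN Hc. unfold par, fsn.
  pose proof (Nat.div_mod_eq c N) as D. pose proof (Nat.mod_upper_bound c N ltac:(lia)).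
  set (q := (c/N)%nat) in *. set (r := (c mod N)%nat) in *.
  destruct (Nat.eqb_spec r 0).
  - destruct (divmod_char N (c+N) (q+1) 0 ltac:(lia) ltac:(lia)) as [-> ->]. simpl.
    destruct (Nat.eqb_spec (c+N) 0). lia. destruct (Nat.eqb_spec c 0); lia.
  - destruct (Nat.lt_ge_cases (r+1) N).
    + destruct (divmod_char N (Datatypes.S c) q (r+1) ltac:(lia) ltac:(lia)) as [-> ->].
      destruct (Nat.eqb_spec (r+1) 0); lia.
    + destruct (divmod_char N (Datatypes.S c) (q+1) 0 ltac:(lia) ltac:(lia)) as [-> ->]. simpl. lia.
Qed.

Lemma fsn_bound N i : (2 <= N)%nat -> (i <= N*N)%nat -> (fsn N i + 2 <= 2*N)%nat.
Proof. intros HN Hi. unfold fsn.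
  pose proof (Nat.div_mod_eq i N) as D. pose proof (Nat.mod_upper_bound i N ltac:(lia)).
  set (q := (i/N)%nat) in *. set (r := (i mod N)%nat) in *.
  destruct (Nat.eqb_spec r 0). destruct (Nat.eqb_spec i 0). lia. assert (q <= N)%nat by nia. lia. lia. Qed.

Lemma Sfast_valid N : (2 <= N)%nat -> ValidSchedule (comb N) (N*N+1) (Sfast N).
Proof. intros HN. split; [|split].
  - intros i Hi. simpl in *. split. lia. apply pos_INR.
  - intros i j t _ _ Hij Hp. simpl in Hp. contradiction.
  - intros c Hc Hr. simpl in *. apply INR_lt_succ. apply fsn_child; lia.
Qed.

Lemma Sfast_makespan N : (2 <= N)%nat -> makespan (comb N) (Sfast N) <= 2 * INR N - 1.
Proof. intros HN. unfold makespan. apply fmax_le.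
  - assert (2 <= INR N) by (replace 2 with (INR 2) by (simpl; lra); apply le_INR; lia). lra.
  - intros i Hi. apply in_nodes in Hi. simpl in *. pose proof (fsn_bound N i HN ltac:(lia)).
    apply le_INR in H. rewrite plus_INR, mult_INR in H. simpl in H. lra.
Qed.

Lemma ceil_nat x : 0 <= x -> exists k, x <= INR k < x + 1.
Proof. intros Hx. destruct (floor_nat x Hx) as [k Hk]. destruct (Req_dec (INR k) x).
  exists k; lra. exists (Datatypes.S k). rewrite S_INR. lra. Qed.



Lemma sumR_ext l f g : (forall i, f i = g i) -> sumR l f = sumR l g.
Proof. intros H. unfold sumR. f_equal. apply map_ext. auto. Qed.

Lemma avg N p S K : (2 <= N)%nat -> ValidSchedule (comb N) p S -> makespan (comb N) S <= INR K ->
  INR (N*N+1) <= sumR (seq 0 K) (fun k => mem_used (comb N) S (INR k)).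
Proof. intros HN HV HK.
  rewrite (sumR_ext _ _ (fun k => sumR (nodes (comb N)) (fun i => indic (start S i) (INR k) (out_end (comb N) S i))))
    by (intros; apply mem_comb).
  rewrite sumR_swap.
  replace (INR (N*N+1)) with (sumR (nodes (comb N)) (fun _ => 1)).
  2:{ rewrite sumR_const. unfold nodes. rewrite length_seq. simpl. lra. }
  apply sumR_le. intros i Hi. apply in_nodes in Hi. simpl in Hi.
  destruct HV as [H1 H2]. destruct (H1 i Hi) as [_ Hs].
  destruct (ceil_nat (start S i) Hs) as [k Hk].
  pose proof (makespan_ge (comb N) S i Hi). simpl in H.
  pose proof (out_end_ge N p S i (conj H1 H2) Hi).
  assert (Hin : In k (seq 0 K)). { apply in_seq. assert (INR k < INR K) by lra. apply INR_lt in H3. lia. }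
  eapply Rle_trans; [|apply (sumR_single_ge _ _ k (fun _ _ => proj1 (indic_range _ _ _)) Hin)].
  rewrite indic_1; lra.
Qed.

Theorem theorem2 :
  forall alpha beta : R, 1 <= alpha -> 1 <= beta ->
  exists (p : nat) (T : InTree) (Cstar Mstar : R),
    PebbleGame T /\ OptMakespan T p Cstar /\ OptPeakMemory T p Mstar /\
    forall S : Schedule, ValidSchedule T p S ->
      forall M : R, PeakMemory T S M ->
        ~ (makespan T S <= alpha * Cstar /\ M <= beta * Mstar).
Proof.
  intros alpha beta Ha Hb.
  destruct (ceil_nat (6 * alpha * beta + 2) ltac:(nra)) as [N HN].
  assert (HN2 : (2 <= N)%nat). { assert (INR 1 < INR N) by (simpl; nra). apply INR_lt in H. lia. }
  assert (HNr : 2 <= INR N) by (replace 2 with (INR 2) by (simpl; lra); apply le_INR; lia).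
  exists (N*N+1)%nat, (comb N), (2 * INR N - 1), 3.
  split; [|split; [|split]].
  - intros i _. simpl. auto.
  - split.
    + exists (Sfast N). split. apply Sfast_valid; auto.
      pose proof (Sfast_makespan N HN2). pose proof (makespan_lb N _ _ HN2 (Sfast_valid N HN2)). lra.
    + intros S HV. apply (makespan_lb N _ _ HN2 HV).
  - split.
    + exists Sseq. split. apply Sseq_valid. apply Sseq_peak; auto.
    + intros S m' HV [Hub _]. eapply Rle_trans. apply (mem_lb N _ S HN2 HV). apply Hub. eauto.
  - intros S HV M [Hub _] [Hmk HM].
    set (C := 2 * INR N - 1) in *.
    destruct (archimed (alpha * C)) as [A1 A2].
    assert (Z0 : (0 <= up (alpha * C))%Z). { apply le_IZR. unfold C in *. nra. }
    set (K := Z.to_nat (up (alpha * C))).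
    assert (HK : INR K = IZR (up (alpha * C))) by (unfold K; rewrite INR_IZR_INZ, Z2Nat.id; auto).
    pose proof (avg N _ S K HN2 HV ltac:(lra)) as Havg.
    assert (Hs : sumR (seq 0 K) (fun k => mem_used (comb N) S (INR k)) <= INR K * M).
    { eapply Rle_trans. apply (sumR_le _ _ (fun _ => M)). intros k _. apply Hub. eauto.
      rewrite sumR_const, length_seq. lra. }
    pose proof (pos_INR K).
    assert (INR K * M <= INR K * (3 * beta)) by (apply Rmult_le_compat_l; lra).
    assert (INR K <= 2 * alpha * INR N) by (unfold C in *; nra).
    assert (INR K * (3 * beta) <= 2 * alpha * INR N * (3 * beta)) by (apply Rmult_le_compat_r; lra).
    assert (2 * alpha * INR N * (3 * beta) <= INR N * INR N) by nra.
    rewrite plus_INR, mult_INR in Havg. simpl in Havg. lra.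
Qed.
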